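(* Let $(\mathcal{S},\mathcal{R})$ be a positive presentation and let $\curvearrowright_r'$ be the binary relation on words on $\mathcal{S}\cup\mathcal{S}^{-1}$ defined as $\curvearrowright_r$ except that in each step the words $u$ and $v$ are required to have length exactly $1$: that is, $\mathbf{w}\curvearrowright_r'\mathbf{w}'$ if $\mathbf{w}'$ is obtained from $\mathbf{w}$ by a finite sequence of steps each of which either deletes a subword $s^{-1}s$ with $s\in\mathcal{S}$, or replaces a subword $s^{-1}t$ with $s,t\in\mathcal{S}$ by a word $v'u'^{-1}$ ($u',v'\in\mathcal{S}^*$) such that $sv'=tu'$ is a relation of $\mathcal{R}$. Then $\curvearrowright_r'$ coincides with $\curvearrowright_r$.
   Context: A positive presentation is a pair $(\mathcal{S},\mathcal{R})$ where $\mathcal{S}$ is a nonempty set of letters and $\mathcal{R}$ is a family of relations $u=v$, i.e. unordered pairs $\{u,v\}$ of nonempty words in the free monoid $\mathcal{S}^*$. Let $\mathcal{S}^{-1}=\{s^{-1}:s\in\mathcal{S}\}$ be a disjoint copy of $\mathcal{S}$; for $u\in\mathcal{S}^*$, $u^{-1}$ is obtained by reversing the order of the letters of $u$ and replacing each $s$ by $s^{-1}$. Right reversing: for words $\mathbf{w},\mathbf{w}'$ on $\mathcal{S}\cup\mathcal{S}^{-1}$ we write $\mathbf{w}\curvearrowright_r\mathbf{w}'$ if $\mathbf{w}'$ is obtained from $\mathbf{w}$ by a finite (possibly empty) sequence of steps, each of which either deletes a subword $u^{-1}u$ with $u\in\mathcal{S}^*$ nonempty, or replaces a subword $u^{-1}v$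 with $u,v\in\mathcal{S}^*$ nonempty by a word $v'u'^{-1}$ with $u',v'\in\mathcal{S}^*$ such that $uv'=vu'$ is a relation of $\mathcal{R}$. *)

(* Defs.v *)
From Stdlib Require Import List Relations.
Import ListNotations.

(* A signed letter on S ∪ S^{-1}: [inl s] is s, [inr s] is s^{-1}. *)
Definition sletter (S : Type) : Type := (S + S)%type.

Definition posw {S : Type} (u : list S) : list (sletter S) := map inl u.

Definition invw {S : Type} (u : list S) : list (sletter S) := rev (map inr u).

(* A positive presentation: relations are given as a predicate on pairs of
   words; a relation x = y is unordered, so "x = y is a relation of R"
   means (x,y) or (y,x) is in the family. *)
Definition positive_presentation {S : Type} (R : list S * list S -> Prop) : Prop :=
  inhabited S /\ forall x y, R (x, y) -> x <> [] /\ y <> [].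

Definition is_rel {S : Type} (R : list S * list S -> Prop) (x y : list S) : Prop :=
  R (x, y) \/ R (y, x).

Inductive rstep {S : Type} (R : list S * list S -> Prop) :
    list (sletter S) -> list (sletter S) -> Prop :=
| rstep_del : forall (a b : list (sletter S)) (u : list S),
    u <> [] -> rstep R (a ++ invw u ++ posw u ++ b) (a ++ b)
| rstep_rev : forall (a b : list (sletter S)) (u v u' v' : list S),
    u <> [] -> v <> [] -> is_rel R (u ++ v') (v ++ u') ->
    rstep R (a ++ invw u ++ posw v ++ b) (a ++ posw v' ++ invw u' ++ b).

Inductive rstep1 {S : Type} (R : list S * list S -> Prop) :
    list (sletter S) -> list (sletter S) -> Prop :=
| rstep1_del : forall (a b : list (sletter S)) (s : S),
    rstep1 R (a ++ invw [s] ++ posw [s] ++ b) (a ++ b)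
| rstep1_rev : forall (a b : list (sletter S)) (s t : S) (u' v' : list S),
    is_rel R ([s] ++ v') ([t] ++ u') ->
    rstep1 R (a ++ invw [s] ++ posw [t] ++ b) (a ++ posw v' ++ invw u' ++ b).

Definition rrev {S : Type} (R : list S * list S -> Prop) := clos_refl_trans _ (rstep R).
Definition rrev1 {S : Type} (R : list S * list S -> Prop) := clos_refl_trans _ (rstep1 R).

(* Main.v *)
Require Import Defs.
From Stdlib Require Import List Relations.
Import ListNotations.

Lemma invw_app {S : Type} (x y : list S) : invw (x ++ y) = invw y ++ invw x.
Proof. unfold invw. rewrite map_app, rev_app_distr. reflexivity. Qed.

Lemma posw_app {S : Type} (x y : list S) : posw (x ++ y) = posw x ++ posw y.
Proof. unfold posw. apply map_app. Qed.

Lemma del1 {S : Type} (R : list S * list S -> Prop) (u : list S) :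
  forall a b, rrev1 R (a ++ invw u ++ posw u ++ b) (a ++ b).
Proof.
  induction u as [|s u0 IH]; intros a b.
  - apply rt_refl.
  - apply rt_trans with (a ++ invw u0 ++ posw u0 ++ b); [|apply IH].
    apply rt_step.
    replace (a ++ invw (s :: u0) ++ posw (s :: u0) ++ b)
      with ((a ++ invw u0) ++ invw [s] ++ posw [s] ++ (posw u0 ++ b)).
    + replace (a ++ invw u0 ++ posw u0 ++ b) with ((a ++ invw u0) ++ (posw u0 ++ b))
        by (rewrite <- !app_assoc; reflexivity).
      apply rstep1_del.
    + change (s :: u0) with ([s] ++ u0). rewrite invw_app, posw_app.
      rewrite <- !app_assoc. reflexivity.
Qed.

Lemma step_sim {S : Type} (R : list S * list S -> Prop) w w' :
  rstep R w w' -> rrev1 R w w'.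
Proof.
  intros H. destruct H as [a b u Hu | a b u v u' v' Hu Hv Hrel].
  - apply del1.
  - destruct u as [|s u0]; [congruence|]. destruct v as [|t v0]; [congruence|].
    apply rt_trans with
      (a ++ invw u0 ++ posw u0 ++ (posw v' ++ invw u' ++ invw v0 ++ posw v0 ++ b)).
    + apply rt_step.
      replace (a ++ invw (s :: u0) ++ posw (t :: v0) ++ b)
        with ((a ++ invw u0) ++ invw [s] ++ posw [t] ++ (posw v0 ++ b)).
      * replace (a ++ invw u0 ++ posw u0 ++ (posw v' ++ invw u' ++ invw v0 ++ posw v0 ++ b))
          with ((a ++ invw u0) ++ posw (u0 ++ v') ++ invw (v0 ++ u') ++ (posw v0 ++ b)).
        -- apply rstep1_rev. exact Hrel.
        -- rewrite invw_app, posw_app. rewrite <- !app_assoc. reflexivity.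
      * change (s :: u0) with ([s] ++ u0). change (t :: v0) with ([t] ++ v0).
        rewrite invw_app, posw_app. rewrite <- !app_assoc. reflexivity.
    + apply rt_trans with (a ++ (posw v' ++ invw u' ++ invw v0 ++ posw v0 ++ b)).
      * apply del1.
      * replace (a ++ posw v' ++ invw u' ++ invw v0 ++ posw v0 ++ b)
          with ((a ++ posw v' ++ invw u') ++ invw v0 ++ posw v0 ++ b)
          by (rewrite <- !app_assoc; reflexivity).
        replace (a ++ posw v' ++ invw u' ++ b) with ((a ++ posw v' ++ invw u') ++ b)
          by (rewrite <- !app_assoc; reflexivity).
        apply del1.
Qed.

Theorem lemma1p4 (S : Type) (R : list S * list S -> Prop)
  (HR : positive_presentation R) :
  forall w w' : list (sletter S), rrev1 R w w' <-> rrev R w w'.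
Proof.
  intros w w'. split; intros H; induction H.
  - apply rt_step. destruct H.
    + apply (rstep_del R a b [s]). discriminate.
    + apply (rstep_rev R a b [s] [t] u' v'); [discriminate|discriminate|exact H].
  - apply rt_refl.
  - eapply rt_trans; eauto.
  - apply step_sim; assumption.
  - apply rt_refl.
  - eapply rt_trans; eauto.
Qed.
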